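(* Let $\mathcal{C}$ be a finitary $2$-category over a field $\Bbbk$, and let $(\mathcal{S}(\mathcal{C}),* )$ be its multisemigroup: $\mathcal{S}(\mathcal{C})$ is the set of isomorphism classes of indecomposable $1$-morphisms and $[F]*[G]=\{[H]: H\text{ is isomorphic to a direct summand of }F\circ G\}$. Then $(\mathcal{S}(\mathcal{C}),* )$ admits a deformation.
   Context: A $2$-category is $\Bbbk$-admissible if each category $\mathcal{C}(\mathtt{i},\mathtt{j})$ is $\Bbbk$-linear, idempotent split and Krull–Schmidt and composition is $\Bbbk$-bilinear; it is finitary if moreover it has finitely many objects, finitely many indecomposable $1$-morphisms up to isomorphism, finite-dimensional spaces of $2$-morphisms, and indecomposable identity $1$-morphisms. A finitary multisemigroup with multiplicities on a non-empty set $S$ is a map $\mu:S\times S\to\{\text{functions }S\to\mathrm{Card}_{\aleph_0}\}$ ($\mathrm{Card}_{\aleph_0}$ = cardinals $\le\aleph_0$ with truncated cardinal arithmetic), $(s,t)\mapsto\mu_{s,t}$, with all values finite, $\{t:\mu_{r,s}(t)\neq0\}$ finite for all $r,s$, and $\sum_{i\in S}\mu_{s,t}(i)\mu_{r,i}=\sum_{j\in S}\mu_{r,s}(j)\mu_{j,t}$ for all $r,s,t\in S$ (where $\lambda\nu$ is the pointwise sum of $\lambda$ copies of $\nu$). A deformation of a finite multisemigroup $(S,* )$ is a finitary multisemigroup with multiplicities $(S,\mu)$ such that for all $x,y,z\in S$: $z\in x*y$ if and only if $\mu_{x,y}(z)\neq0$. *)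

(* Defs.v *)
From HB Require Import structures.
From mathcomp Require Import all_boot all_order all_algebra.
Set Implicit Arguments. Unset Strict Implicit. Unset Printing Implicit Defensive.
Import GRing.Theory.
Local Open Scope ring_scope.

(* Data of a (strict) 2-category whose 2-morphism spaces are finite-dimensional
   k-vector spaces (vectType k = finite-dimensional vector space). *)
Record cat2 (k : fieldType) := Cat2 {
  Ob : finType;
  Mor : Ob -> Ob -> Type;
  id1 : forall i, Mor i i;
  comp1 : forall i j l, Mor j l -> Mor i j -> Mor i l;
  Hom : forall i j, Mor i j -> Mor i j -> vectType k;
  id2 : forall (i j : Ob) (F : Mor i j), Hom F F;
  vcomp : forall (i j : Ob) (F G H : Mor i j), Hom G H -> Hom F G -> Hom F H;
  hcomp : forall (i j l : Ob) (F F' : Mor j l) (G G' : Mor i j),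
            Hom F F' -> Hom G G' -> Hom (comp1 F G) (comp1 F' G')
}.
Arguments Ob {k}.
Arguments Mor {k c} i j.
Arguments id1 {k c} i.
Arguments comp1 {k c i j l}.
Arguments Hom {k c i j}.
Arguments id2 {k c i j}.
Arguments vcomp {k c i j F G H}.
Arguments hcomp {k c i j l F F' G G'}.

Definition castHom k (C : cat2 k) (i j : Ob C) (F F' G G' : Mor i j)
  (e1 : F = F') (e2 : G = G') (a : Hom F G) : Hom F' G' :=
  match e1 in _ = X, e2 in _ = Y return Hom X Y with erefl, erefl => a end.

Record is_strict_2cat k (C : cat2 k) : Prop := {
  c1A : forall (i j l m : Ob C) (F : Mor l m) (G : Mor j l) (H : Mor i j),
          comp1 (comp1 F G) H = comp1 F (comp1 G H);
  c1l : forall (i j : Ob C) (F : Mor i j), comp1 (id1 j) F = F;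
  c1r : forall (i j : Ob C) (F : Mor i j), comp1 F (id1 i) = F;
  vA : forall (i j : Ob C) (F G H K : Mor i j) (a : Hom H K) (b : Hom G H) (c : Hom F G),
          vcomp (vcomp a b) c = vcomp a (vcomp b c);
  vl : forall (i j : Ob C) (F G : Mor i j) (a : Hom F G), vcomp (id2 G) a = a;
  vr : forall (i j : Ob C) (F G : Mor i j) (a : Hom F G), vcomp a (id2 F) = a;
  vlin_l : forall (i j : Ob C) (F G H : Mor i j) (x : k) (a a' : Hom G H) (b : Hom F G),
          vcomp (x *: a + a') b = x *: vcomp a b + vcomp a' b;
  vlin_r : forall (i j : Ob C) (F G H : Mor i j) (x : k) (a : Hom G H) (b b' : Hom F G),
          vcomp a (x *: b + b') = x *: vcomp a b + vcomp a b';
  hlin_l : forall (i j l : Ob C) (F F' : Mor j l) (G G' : Mor i j) (x : k)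
          (a a' : Hom F F') (b : Hom G G'),
          hcomp (x *: a + a') b = x *: hcomp a b + hcomp a' b;
  hlin_r : forall (i j l : Ob C) (F F' : Mor j l) (G G' : Mor i j) (x : k)
          (a : Hom F F') (b b' : Hom G G'),
          hcomp a (x *: b + b') = x *: hcomp a b + hcomp a b';
  hid : forall (i j l : Ob C) (F : Mor j l) (G : Mor i j), hcomp (id2 F) (id2 G) = id2 (comp1 F G);
  interchange : forall (i j l : Ob C) (F F' F'' : Mor j l) (G G' G'' : Mor i j)
          (a : Hom F' F'') (a' : Hom F F') (b : Hom G' G'') (b' : Hom G G'),
          hcomp (vcomp a a') (vcomp b b') = vcomp (hcomp a b) (hcomp a' b');
  hA : forall (i j l m : Ob C) (F F' : Mor l m) (G G' : Mor j l) (H H' : Mor i j)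
          (a : Hom F F') (b : Hom G G') (c : Hom H H'),
          castHom (c1A F G H) (c1A F' G' H') (hcomp (hcomp a b) c)
          = hcomp a (hcomp b c);
  hl : forall (i j : Ob C) (F F' : Mor i j) (a : Hom F F'),
          castHom (c1l F) (c1l F') (hcomp (id2 (id1 j)) a) = a;
  hr : forall (i j : Ob C) (F F' : Mor i j) (a : Hom F F'),
          castHom (c1r F) (c1r F') (hcomp a (id2 (id1 i))) = a
}.

Section HomCat.
Variables (k : fieldType) (C : cat2 k) (i j : Ob C).

Definition isZero (X : Mor i j) : Prop := id2 X = 0.

Definition biprod (X Y Z : Mor i j) : Prop :=
  exists (p1 : Hom X Y) (p2 : Hom X Z) (e1 : Hom Y X) (e2 : Hom Z X),
    [/\ vcomp p1 e1 = id2 Y, vcomp p2 e2 = id2 Z, vcomp p1 e2 = 0,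
        vcomp p2 e1 = 0 & vcomp e1 p1 + vcomp e2 p2 = id2 X].

Definition additive : Prop :=
  (exists Z : Mor i j, isZero Z) /\ (forall Y Z : Mor i j, exists X, biprod X Y Z).

Definition idem_split : Prop :=
  forall (X : Mor i j) (e : Hom X X), vcomp e e = e ->
    exists (Y : Mor i j) (r : Hom X Y) (s : Hom Y X), vcomp s r = e /\ vcomp r s = id2 Y.

Definition invertible (X Y : Mor i j) (f : Hom X Y) : Prop :=
  exists g : Hom Y X, vcomp g f = id2 X /\ vcomp f g = id2 Y.

Definition iso (X Y : Mor i j) : Prop := exists f : Hom X Y, invertible f.

Definition local_end (X : Mor i j) : Prop :=
  id2 X <> 0 /\ forall f : Hom X X, invertible f \/ invertible (id2 X - f).

Definition krull_schmidt : Prop :=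
  additive /\
  forall X : Mor i j, exists (n : nat) (Y : 'I_n -> Mor i j)
      (e : forall t, Hom (Y t) X) (p : forall t, Hom X (Y t)),
    [/\ forall t, local_end (Y t),
        forall t, vcomp (p t) (e t) = id2 (Y t),
        forall t s, t != s -> vcomp (p t) (e s) = 0
      & \sum_(t < n) vcomp (e t) (p t) = id2 X].

Definition indecomposable (X : Mor i j) : Prop :=
  ~ isZero X /\ forall Y Z, biprod X Y Z -> isZero Y \/ isZero Z.

Definition summand (H X : Mor i j) : Prop := exists Z, biprod X H Z.

End HomCat.

Definition finitary k (C : cat2 k) : Prop :=
  [/\ is_strict_2cat C,
      forall i j : Ob C, [/\ additive i j, idem_split i j & krull_schmidt i j],
      forall i j : Ob C, exists (n : nat) (R : 'I_n -> Mor i j),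
        forall F : Mor i j, indecomposable F -> exists t, iso (R t) F
    & forall i : Ob C, indecomposable (id1 i)].

Record mor1 k (C : cat2 k) := Mor1 { msrc : Ob C; mtgt : Ob C; mor : Mor msrc mtgt }.
Arguments Mor1 {k C msrc mtgt}.

Definition indecP k (C : cat2 k) (x : mor1 C) : Prop := indecomposable (mor x).

Definition isoP k (C : cat2 k) (x y : mor1 C) : Prop :=
  exists (i j : Ob C) (F G : Mor i j), [/\ x = Mor1 F, y = Mor1 G & iso F G].

Definition iso_classes k (C : cat2 k) (S : finType) (cls : mor1 C -> S) : Prop :=
  (forall s, exists x, indecP x /\ cls x = s) /\
  (forall x y, indecP x -> indecP y -> (cls x = cls y <-> isoP x y)).

Definition in_prod k (C : cat2 k) (x y z : mor1 C) : Prop :=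
  exists (i j l : Ob C) (F : Mor j l) (G : Mor i j) (H : Mor i l),
    [/\ x = Mor1 F, y = Mor1 G, z = Mor1 H & summand H (comp1 F G)].

(* the multisemigroup operation: u \in s * t *)
Definition msg_star k (C : cat2 k) (S : finType) (cls : mor1 C -> S) (s t u : S) : Prop :=
  exists x y z, [/\ indecP x, indecP y, indecP z &
    [/\ cls x = s, cls y = t, cls z = u & in_prod x y z]].

(* finitary multisemigroup with multiplicities on a finite set S;
   mu r s t = mu_{r,s}(t) (finite values, so nat) *)
Definition fin_msg_mult (S : finType) (mu : S -> S -> S -> nat) : Prop :=
  forall r s t u : S,
    (\sum_(i : S) mu s t i * mu r i u = \sum_(j : S) mu r s j * mu j t u)%N.

Definition deformation (S : finType) (star : S -> S -> S -> Prop)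
  (mu : S -> S -> S -> nat) : Prop :=
  fin_msg_mult mu /\ forall x y z, star x y z <-> mu x y z <> 0%N.

(* Main.v *)
Require Import Defs.
From mathcomp Require Import all_boot all_order all_algebra.
From HB Require Import structures.
From Stdlib Require Import Classical ClassicalEpsilon Eqdep_dec.
From mathcomp Require Import zify.
Import Defs.
Module PA.
Set Implicit Arguments. Unset Strict Implicit. Unset Printing Implicit Defensive.
Import GRing.Theory.
Local Open Scope ring_scope.

Section LinAlg.
Variable k : fieldType.

Lemma img_exists (V W : vectType k) (f : {linear V -> W}) (finj : injective f)
  (U : {vspace V}) : exists U' : {vspace W},
  (forall w, w \in U' <-> exists2 u, u \in U & w = f u) /\ \dim U' = \dim U.
Proof.
exists (linfun f @: U)%VS; split.
  move=> w; split.
    by case/memv_imgP=> u Uu ->; exists u; rewrite ?lfunE.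
  by case=> u Uu ->; apply/memv_imgP; exists u; rewrite ?lfunE.
apply: limg_dim_eq.
have /eqP -> : lker (linfun f) == 0%VS.
  by apply/lker0P => x y; rewrite !lfunE; apply: finj.
by rewrite capv0.
Qed.

Lemma closure_vspace (V : vectType k) (P : V -> Prop) :
  P 0 -> (forall x u v, P u -> P v -> P (x *: u + v)) ->
  exists U : {vspace V}, forall v, v \in U <-> P v.
Proof.
move=> P0 PL.
have main : forall m (U : {vspace V}), (\dim {:V} - \dim U <= m)%N ->
   (forall v, v \in U -> P v) -> exists U' : {vspace V}, forall v, v \in U' <-> P v.
  elim=> [|m IH] U hm hU.
    exists U => v; split; first exact: hU.
    have /eqP -> : U == fullv.
      by rewrite eqEdim subvf /= -subn_eq0 -leqn0.
    by rewrite memvf.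
  case: (classic (forall v, P v -> v \in U)) => [hall|].
    by exists U => v; split; [apply: hU | apply: hall].
  move=> /not_all_ex_not [v hv]; have [Pv nUv] := imply_to_and _ _ hv.
  apply: (IH (U + <[v]>)%VS).
    have lt : (\dim U < \dim (U + <[v]>))%N.
      rewrite (ltn_leqif (dimv_leqif_eq (addvSl U <[v]>))).
      apply/negP => /eqP e; apply: nUv; rewrite e.
      by apply/memv_addP; exists 0; [exact: mem0v | exists v; [exact: memv_line| rewrite add0r]].
    have : (\dim (U + <[v]>) <= \dim {:V})%N by apply: dimvS; apply: subvf.
    move: hm lt; lia.
  move=> w /memv_addP [u Uu [w' /vlineP [c ->] ->]].
  rewrite addrC; apply: PL => //; exact: hU.
apply: (main (\dim {:V}) 0%VS); first by rewrite leq_subr.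
by move=> v; rewrite memv0 => /eqP ->.
Qed.


Definition imgv (V W : vectType k) (f : {linear V -> W}) (U : {vspace V}) :=
  (linfun f @: U)%VS.

Lemma mem_imgv (V W : vectType k) (f : {linear V -> W}) U w :
  w \in imgv f U <-> exists2 u, u \in U & w = f u.
Proof.
split.
  by case/memv_imgP=> u Uu ->; exists u; rewrite ?lfunE.
by case=> u Uu ->; apply/memv_imgP; exists u; rewrite ?lfunE.
Qed.

Lemma dim_imgv (V W : vectType k) (f : {linear V -> W}) (finj : injective f) U :
  \dim (imgv f U) = \dim U.
Proof.
apply: limg_dim_eq.
have /eqP -> : lker (linfun f) == 0%VS.
  by apply/lker0P => x y; rewrite !lfunE; apply: finj.
by rewrite capv0.
Qed.

Section Decomp.
Variables (W : vectType k) (n : nat) (V : 'I_n -> vectType k).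
Variables (phi : forall a, {linear V a -> W}) (psi : forall a, {linear W -> V a}).
Hypothesis hpp : forall a (v : V a), psi a (phi a v) = v.
Hypothesis hpo : forall a b (v : V b), a != b -> psi a (phi b v) = 0.
Hypothesis hsum : forall w, \sum_a phi a (psi a w) = w.

Lemma phi_inj a : injective (phi a).
Proof. by move=> x y e; rewrite -(hpp x) e hpp. Qed.

Lemma dec_direct (T : forall a, {vspace W}) :
  (forall a w, w \in T a -> exists v, w = phi a v) -> directv (\sum_a T a).
Proof.
move=> hT; apply/directv_sum_independent => us hus hs0 a _.
have := congr1 (psi a) hs0; rewrite linear_sum linear0.
rewrite (bigD1 a) //= big1 ?addr0.
  have [v ->] := hT a _ (hus a isT).
  by rewrite hpp => ->; rewrite linear0.
move=> b ba; have [v ->] := hT b _ (hus b isT).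
by apply: hpo; rewrite eq_sym.
Qed.

Lemma dim_decomp (U : forall a, {vspace V a}) (U0 : {vspace W}) :
  (forall w, w \in U0 <-> forall a, psi a w \in U a) ->
  (\dim {:W} - \dim U0 = \sum_a (\dim {:V a} - \dim (U a)))%N.
Proof.
move=> hU.
pose Va a := imgv (phi a) fullv.
pose Ua a := imgv (phi a) (U a).
have eF : fullv = (\sum_a Va a)%VS.
  apply/eqP; rewrite eqEsubv subvf andbT; apply/subvP => w _.
  rewrite -(hsum w); apply: memv_sumr => a _; apply/mem_imgv; exists (psi a w) => //.
  exact: memvf.
have eU : U0 = (\sum_a Ua a)%VS.
  apply/eqP; rewrite eqEsubv; apply/andP; split; apply/subvP => w.
    move=> hw; rewrite -(hsum w); apply: memv_sumr => a _; apply/mem_imgv.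
    by exists (psi a w) => //; move/hU: hw; apply.
  case/memv_sumP=> us hus ->; apply: rpred_sum => a _.
  have /mem_imgv [u Uu ->] := hus a isT.
  apply/hU => b; case: (eqVneq b a) => [-> | ba]; first by rewrite hpp.
  by rewrite hpo // mem0v.
have dV : directv (\sum_a Va a).
  by apply: dec_direct => a w /mem_imgv [u _ ->]; exists u.
have dU : directv (\sum_a Ua a).
  by apply: dec_direct => a w /mem_imgv [u _ ->]; exists u.
rewrite (_ : \dim {:W} = \dim (\sum_a Va a)%VS); last by rewrite -eF.
rewrite eU (directvP dV) (directvP dU) /= -sumnB.
  by apply: eq_bigr => a _; rewrite /Va /Ua !dim_imgv //; apply: phi_inj.
by move=> a _; rewrite /Va /Ua !dim_imgv; [apply: dimvS; apply: subvf | apply: phi_inj..].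
Qed.
End Decomp.

End LinAlg.

End PA.
Import PA.

Module PB.
Set Implicit Arguments. Unset Strict Implicit. Unset Printing Implicit Defensive.
Import GRing.Theory.
Local Open Scope ring_scope.

Section Basics.
Variables (k : fieldType) (C : cat2 k) (HC : is_strict_2cat C).

Section Lin.
Variables (i j : Ob C).

Definition vRl (F G H : Mor i j) (b : Hom F G) : {linear Hom G H -> Hom F H} :=
  HB.pack (fun a => vcomp a b)
    (GRing.isLinear.Build _ _ _ _ (fun a => vcomp a b)
       (fun x a a' => vlin_l HC x a a' b)).
Definition vLl (F G H : Mor i j) (a : Hom G H) : {linear Hom F G -> Hom F H} :=
  HB.pack (fun b => vcomp a b)
    (GRing.isLinear.Build _ _ _ _ (fun b => vcomp a b)
       (fun x b b' => vlin_r HC x a b b')).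

Lemma vRlE (F G H : Mor i j) (b : Hom F G) (a : Hom G H) : vRl H b a = vcomp a b.
Proof. by []. Qed.
Lemma vLlE (F G H : Mor i j) (a : Hom G H) (b : Hom F G) : vLl F a b = vcomp a b.
Proof. by []. Qed.

Lemma vcomp0l (F G H : Mor i j) (b : Hom F G) : vcomp (0 : Hom G H) b = 0.
Proof. by rewrite -vRlE linear0. Qed.
Lemma vcomp0r (F G H : Mor i j) (a : Hom G H) : vcomp a (0 : Hom F G) = 0.
Proof. by rewrite -vLlE linear0. Qed.
Lemma vcompDl (F G H : Mor i j) (a a' : Hom G H) (b : Hom F G) :
  vcomp (a + a') b = vcomp a b + vcomp a' b.
Proof. by rewrite -!vRlE linearD. Qed.
Lemma vcompDr (F G H : Mor i j) (a : Hom G H) (b b' : Hom F G) :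
  vcomp a (b + b') = vcomp a b + vcomp a b'.
Proof. by rewrite -!vLlE linearD. Qed.
Lemma vcompBl (F G H : Mor i j) (a a' : Hom G H) (b : Hom F G) :
  vcomp (a - a') b = vcomp a b - vcomp a' b.
Proof. by rewrite -!vRlE linearB. Qed.
Lemma vcompBr (F G H : Mor i j) (a : Hom G H) (b b' : Hom F G) :
  vcomp a (b - b') = vcomp a b - vcomp a b'.
Proof. by rewrite -!vLlE linearB. Qed.
Lemma vcompZl (F G H : Mor i j) x (a : Hom G H) (b : Hom F G) :
  vcomp (x *: a) b = x *: vcomp a b.
Proof. by rewrite -!vRlE linearZ. Qed.
Lemma vcompZr (F G H : Mor i j) x (a : Hom G H) (b : Hom F G) :
  vcomp a (x *: b) = x *: vcomp a b.
Proof. by rewrite -!vLlE linearZ. Qed.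
Lemma vcomp_suml (F G H : Mor i j) (I : finType) (a : I -> Hom G H) (b : Hom F G) :
  vcomp (\sum_t a t) b = \sum_t vcomp (a t) b.
Proof. by rewrite -!vRlE linear_sum. Qed.
Lemma vcomp_sumr (F G H : Mor i j) (I : finType) (a : Hom G H) (b : I -> Hom F G) :
  vcomp a (\sum_t b t) = \sum_t vcomp a (b t).
Proof. by rewrite -!vLlE linear_sum. Qed.

Lemma vAs (F G H K : Mor i j) (a : Hom H K) (b : Hom G H) (c : Hom F G) :
  vcomp a (vcomp b c) = vcomp (vcomp a b) c.
Proof. by rewrite (vA HC). Qed.

Lemma inv_id (X : Mor i j) : invertible (id2 X).
Proof. by exists (id2 X); rewrite (vl HC). Qed.

Lemma not_inv0 (X Y : Mor i j) : id2 X <> 0 -> ~ invertible (0 : Hom X Y).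
Proof. by move=> nz [g [h _]]; apply: nz; rewrite -h vcomp0r. Qed.

Lemma inv_comp (X Y Z : Mor i j) (f : Hom X Y) (g : Hom Y Z) :
  invertible f -> invertible g -> invertible (vcomp g f).
Proof.
move=> [f' [h1 h2]] [g' [h3 h4]]; exists (vcomp f' g'); split.
  by rewrite vAs -(vAs f') h3 (vr HC) h1.
by rewrite vAs -(vAs g) h2 (vr HC) h4.
Qed.

Lemma inv_scale (X Y : Mor i j) (c : k) (f : Hom X Y) :
  id2 X <> 0 -> invertible (c *: f) -> invertible f.
Proof.
move=> nz hinv; case: (eqVneq c 0) => [c0|cn0].
  by move: hinv; rewrite c0 scale0r => /not_inv0; case.
case: hinv => g [h1 h2]; exists (c *: g); split.
  by rewrite vcompZl -vcompZr.
by rewrite vcompZr -vcompZl.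
Qed.

Lemma local_sum (H : Mor i j) (x y : Hom H H) : local_end H ->
  invertible (x + y) -> invertible x \/ invertible y.
Proof.
move=> [nz hl] [v [h1 h2]].
have hs : vcomp v x + vcomp v y = id2 H by rewrite -vcompDr.
have fix1 : forall z : Hom H H, invertible (vcomp v z) -> invertible z.
  move=> z [w [w1 w2]]; exists (vcomp w v); split; first by rewrite -vAs.
  have e : vcomp z w = x + y.
    by rewrite -[LHS](vl HC) -h2 -vAs (vAs v) w2 (vr HC).
  by rewrite vAs e h2.
case: (hl (vcomp v x)) => [/fix1|]; first by left.
by rewrite -hs addrC addKr => /fix1; right.
Qed.

Lemma local_idem (Y : Mor i j) (e : Hom Y Y) : local_end Y ->
  vcomp e e = e -> e = 0 \/ e = id2 Y.
Proof.
move=> [nz hl] he; case: (hl e) => [[g [h1 h2]]|[g [h1 h2]]].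
  by right; rewrite -h1 -{2}he vAs h1 (vl HC).
left; have : vcomp (id2 Y - e) e = 0 by rewrite vcompBl (vl HC) he subrr.
by move=> h0; rewrite -[e](vl HC) -h1 -vAs h0 vcomp0r.
Qed.

Lemma local_nz (Y : Mor i j) : local_end Y -> id2 Y <> 0.
Proof. by case. Qed.

Lemma local_sum_big (H : Mor i j) (I : finType) (x : I -> Hom H H) : local_end H ->
  (forall t, ~ invertible (x t)) -> ~ invertible (\sum_t x t).
Proof.
move=> hl hx; apply: (big_ind (fun z => ~ invertible z)).
- exact: not_inv0 (local_nz hl).
- by move=> a b na nb /(local_sum hl) [].
- by move=> t _; apply: hx.
Qed.

End Lin.
End Basics.

End PB.
Import PB.

Module PCc.
Set Implicit Arguments. Unset Strict Implicit. Unset Printing Implicit Defensive.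
Import GRing.Theory.
Local Open Scope ring_scope.

Section Mult.
Variables (k : fieldType) (C : cat2 k) (HC : is_strict_2cat C).
Variables (i j : Ob C).

Definition RP (H X : Mor i j) (f : Hom H X) : Prop :=
  forall g : Hom X H, ~ invertible (vcomp g f).

Definition Rsp (H X : Mor i j) : {vspace Hom H X} :=
  epsilon (inhabits 0%VS) (fun U => forall v, v \in U <-> RP v).

Definition Q (H X : Mor i j) : nat := (\dim {:Hom H X} - \dim (Rsp H X))%N.

Lemma memRsp (H X : Mor i j) : local_end H -> forall f : Hom H X, f \in Rsp H X <-> RP f.
Proof.
move=> hl; apply: (epsilon_spec (inhabits 0%VS) (fun U => forall v, v \in U <-> RP v)).
apply: closure_vspace.
  by move=> g; rewrite (vcomp0r HC); apply: not_inv0 (local_nz hl).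
move=> x u v hu hv g; rewrite (vcompDr HC) (vcompZr HC) => /(local_sum HC hl) [].
  by move/(inv_scale HC (local_nz hl)); apply: hu.
exact: hv.
Qed.

Definition decomp (X : Mor i j) n (Z : 'I_n -> Mor i j) (E : forall a, Hom (Z a) X)
  (P : forall a, Hom X (Z a)) : Prop :=
  [/\ forall a, vcomp (P a) (E a) = id2 (Z a),
      forall a b, a != b -> vcomp (P a) (E b) = 0
    & \sum_a vcomp (E a) (P a) = id2 X].

Lemma Qdec (H X : Mor i j) n (Z : 'I_n -> Mor i j) E P :
  local_end H -> @decomp X n Z E P -> Q H X = (\sum_a Q H (Z a))%N.
Proof.
move=> hl [h1 h2 h3].
apply: (@dim_decomp k (Hom H X) n (fun a => Hom H (Z a)) (fun a => vLl HC H (E a))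
          (fun a => vLl HC H (P a))).
- by move=> a v; rewrite !vLlE (vAs HC) h1 (vl HC).
- by move=> a b v ab; rewrite !vLlE (vAs HC) h2 // (vcomp0l HC).
- move=> w; rewrite (eq_bigr (fun a => vcomp (vcomp (E a) (P a)) w)).
    by rewrite -(vcomp_suml HC) h3 (vl HC).
  by move=> a _; rewrite !vLlE (vAs HC).
- move=> f; rewrite memRsp //; split.
    move=> hf a; rewrite memRsp // vLlE => g; rewrite (vAs HC); apply: hf.
  move=> hf g.
  have -> : vcomp g f = \sum_a vcomp (vcomp g (E a)) (vcomp (P a) f).
    rewrite -[f in LHS](vl HC) -h3 (vcomp_suml HC) (vcomp_sumr HC).
    by apply: eq_bigr => a _; rewrite !(vAs HC).
  apply: (local_sum_big HC hl) => a; move: (hf a); rewrite vLlE memRsp //; apply.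
Qed.

Lemma iso_decomp (X Y : Mor i j) (f : Hom X Y) (g : Hom Y X) :
  vcomp g f = id2 X -> vcomp f g = id2 Y ->
  @decomp X 1 (fun _ => Y) (fun _ => g) (fun _ => f).
Proof.
move=> h1 h2; split => //; first by move=> a b; rewrite !ord1 eqxx.
by rewrite big_ord1.
Qed.

Lemma Q_iso (H X Y : Mor i j) : local_end H -> iso X Y -> Q H X = Q H Y.
Proof.
move=> hl [f [g [h1 h2]]].
by rewrite (Qdec hl (iso_decomp h1 h2)) big_ord1.
Qed.

Lemma Q_full (H X : Mor i j) : local_end H -> (forall f : Hom H X, RP f) -> Q H X = 0%N.
Proof.
move=> hl hall; rewrite /Q.
have /eqP -> : Rsp H X == fullv.
  rewrite eqEsubv subvf /=; apply/subvP => f _; apply/memRsp => //.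
by rewrite subnn.
Qed.

Lemma Q_pos (H X : Mor i j) : local_end H ->
  (0 < Q H X)%N <-> exists (f : Hom H X) (g : Hom X H), invertible (vcomp g f).
Proof.
move=> hl; split.
  move=> hpos; apply: NNPP => hne.
  have : Q H X = 0%N.
    apply: Q_full => // f g hinv; apply: hne; by exists f, g.
  by move=> e; rewrite e in hpos.
move=> [f [g hinv]]; rewrite /Q subn_gt0.
rewrite (ltn_leqif (dimv_leqif_eq (subvf (Rsp H X)))).
apply/negP => /eqP e.
have : f \in Rsp H X by rewrite e memvf.
by move/(memRsp hl) => /(_ g).
Qed.

Lemma Q_self_pos (H : Mor i j) : local_end H -> (0 < Q H H)%N.
Proof.
move=> hl; apply/Q_pos => //; exists (id2 H), (id2 H).
rewrite (vl HC); exact: inv_id.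
Qed.

Lemma Q_noniso (H Y : Mor i j) : local_end H -> local_end Y -> ~ iso H Y -> Q H Y = 0%N.
Proof.
move=> hl hY hni; apply: Q_full => // f g [u [u1 u2]].
pose e := vcomp f (vcomp u g).
have he : vcomp e e = e.
  rewrite /e -!(vAs HC); congr (vcomp f _).
  by rewrite (vAs HC g) (vAs HC u) u1 (vl HC).
case: (local_idem HC hY he) => e0.
  have : vcomp g (vcomp e f) = 0 by rewrite e0 (vcomp0l HC) (vcomp0r HC).
  rewrite /e -!(vAs HC) u1 (vr HC) => h.
  by apply: (not_inv0 HC (local_nz hl) (Y:=H)); rewrite -h; exists u.
apply: hni; exists f, (vcomp u g); split => //.
by rewrite -(vAs HC) u1.
Qed.

End Mult.

End PCc.
Import PCc.

Module PD.
Set Implicit Arguments. Unset Strict Implicit. Unset Printing Implicit Defensive.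
Import GRing.Theory.
Local Open Scope ring_scope.

Section More.
Variables (k : fieldType) (C : cat2 k) (HC : is_strict_2cat C).

Section OneHom.
Variables (i j : Ob C).

Lemma local_iso (X Y : Mor i j) : iso X Y -> local_end Y -> local_end X.
Proof.
move=> [f [g [h1 h2]]] [nz hl]; split.
  move=> e; apply: nz; rewrite -h2 -[g](vl HC) e (vcomp0l HC) (vcomp0r HC) //.
have tr : forall h : Hom X X, invertible (vcomp f (vcomp h g)) -> invertible h.
  move=> h [w [w1 w2]].
  have w1' : forall W (z : Hom W Y), vcomp w (vcomp f (vcomp h (vcomp g z))) = z.
    by move=> W z; rewrite (vAs HC h g z) (vAs HC f) (vAs HC w) w1 (vl HC).
  have w2' : forall W (z : Hom W Y), vcomp f (vcomp h (vcomp g (vcomp w z))) = z.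
    move=> W z; rewrite (vAs HC g w z) (vAs HC h) (vAs HC f).
    by rewrite -!(vAs HC) in w2; rewrite w2 (vl HC).
  exists (vcomp g (vcomp w f)); split.
    by rewrite -[LHS](vr HC) -h1 -!(vAs HC) w1' h1.
  by rewrite -[LHS](vl HC) -h1 -!(vAs HC) w2' h1.
move=> h; case: (hl (vcomp f (vcomp h g))) => [/tr|]; first by left.
move=> hi; right; apply: tr.
by rewrite (vcompBl HC) (vcompBr HC) (vl HC) h2.
Qed.

Lemma summand_of (H X : Mor i j) (E : Hom H X) (P : Hom X H) :
  idem_split i j -> vcomp P E = id2 H ->
  exists Z (r : Hom X Z) (s : Hom Z X),
    [/\ biprod X H Z, vcomp s r = id2 X - vcomp E P & vcomp r s = id2 Z].
Proof.
move=> his hPE.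
have hid : vcomp (id2 X - vcomp E P) (id2 X - vcomp E P) = id2 X - vcomp E P.
  rewrite (vcompBl HC) !(vcompBr HC) (vl HC) (vr HC) -(vAs HC) (vAs HC P) hPE (vl HC).
  by rewrite (vl HC) subrr subr0.
have [Z [r [s [hsr hrs]]]] := his X _ hid.
exists Z, r, s; split => //.
have Ps : vcomp P s = 0.
  rewrite -[s](vr HC) -hrs (vAs HC s r s) hsr (vAs HC P) (vcompBr HC) (vr HC).
  by rewrite (vAs HC P E P) hPE (vl HC) subrr (vcomp0l HC).
have rE : vcomp r E = 0.
  rewrite -[r](vl HC) -hrs -(vAs HC r s r) hsr -(vAs HC r) (vcompBl HC) (vl HC).
  by rewrite -(vAs HC E P E) hPE (vr HC) subrr (vcomp0r HC).
exists P, r, E, s; split => //.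
by rewrite hsr addrC subrK.
Qed.

Lemma biprod_zero_iso (X Y Z : Mor i j) : biprod X Y Z -> isZero Z -> iso X Y.
Proof.
move=> [p1 [p2 [e1 [e2 [h1 h2 h3 h4 h5]]]]] hz.
have e20 : e2 = 0 by rewrite -[e2](vr HC) hz (vcomp0r HC).
exists p1, e1; split => //.
by rewrite -h5 e20 (vcomp0l HC) addr0.
Qed.

Lemma local_indec (Y : Mor i j) : local_end Y -> indecomposable Y.
Proof.
move=> hl; split; first exact: (local_nz hl).
move=> A B [p1 [p2 [e1 [e2 [h1 h2 h3 h4 h5]]]]].
have he : vcomp (vcomp e1 p1) (vcomp e1 p1) = vcomp e1 p1.
  by rewrite -(vAs HC) (vAs HC p1) h1 (vl HC).
case: (local_idem HC hl he) => e0.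
  left; rewrite /isZero -h1 -[vcomp p1 e1](vr HC) -h1 -(vAs HC p1 e1).
  by rewrite (vAs HC e1 p1 e1) e0 (vcomp0l HC) (vcomp0r HC).
right; rewrite /isZero -h2.
have : e2 = 0 by rewrite -[e2](vl HC) -e0 -(vAs HC) h3 (vcomp0r HC).
by move=> ->; rewrite (vcomp0r HC).
Qed.

Lemma indec_local (X : Mor i j) : idem_split i j -> krull_schmidt i j ->
  indecomposable X -> local_end X.
Proof.
move=> his [_ hks] [nz hind].
have [n [Y [e [p [hl h1 h2 h3]]]]] := hks X.
case: n Y e p hl h1 h2 h3 => [|n] Y e p hl h1 h2 h3.
  by exfalso; apply: nz; rewrite /isZero -h3 big_ord0.
have [Z [r [s [hb _ _]]]] := summand_of (E:=e ord0) his (h1 ord0).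
case: (hind _ _ hb) => hz.
  by exfalso; apply: (local_nz (hl ord0)).
apply: (local_iso (biprod_zero_iso hb hz)); exact: hl.
Qed.

End OneHom.

Section HcompLin.
Variables (i j l : Ob C).
Definition hRl (F F' : Mor j l) (G G' : Mor i j) (a : Hom F F') :
  {linear Hom G G' -> Hom (comp1 F G) (comp1 F' G')} :=
  HB.pack (fun b => hcomp a b)
    (GRing.isLinear.Build _ _ _ _ (fun b => hcomp a b)
       (fun x b b' => hlin_r HC x a b b')).
Definition hLl (F F' : Mor j l) (G G' : Mor i j) (b : Hom G G') :
  {linear Hom F F' -> Hom (comp1 F G) (comp1 F' G')} :=
  HB.pack (fun a => hcomp a b)
    (GRing.isLinear.Build _ _ _ _ (fun a => hcomp a b)
       (fun x a a' => hlin_l HC x a a' b)).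

Lemma hcomp_sumr (F F' : Mor j l) (G G' : Mor i j) (I : finType) (a : Hom F F')
  (b : I -> Hom G G') : hcomp a (\sum_t b t) = \sum_t hcomp a (b t).
Proof. exact: (linear_sum (@hRl F F' G G' a)). Qed.
Lemma hcomp_suml (F F' : Mor j l) (G G' : Mor i j) (I : finType) (a : I -> Hom F F')
  (b : Hom G G') : hcomp (\sum_t a t) b = \sum_t hcomp (a t) b.
Proof. exact: (linear_sum (@hLl F F' G G' b)). Qed.
Lemma hcomp0r (F F' : Mor j l) (G G' : Mor i j) (a : Hom F F') :
  hcomp a (0 : Hom G G') = 0.
Proof. exact: (linear0 (@hRl F F' G G' a)). Qed.
Lemma hcomp0l (F F' : Mor j l) (G G' : Mor i j) (b : Hom G G') :
  hcomp (0 : Hom F F') b = 0.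
Proof. exact: (linear0 (@hLl F F' G G' b)). Qed.

Lemma decomp_left (F : Mor j l) (X : Mor i j) n (Z : 'I_n -> Mor i j) E P :
  @decomp _ _ _ _ X n Z E P ->
  @decomp _ _ _ _ (comp1 F X) n (fun a => comp1 F (Z a))
     (fun a => hcomp (id2 F) (E a)) (fun a => hcomp (id2 F) (P a)).
Proof.
move=> [h1 h2 h3]; split.
- by move=> a; rewrite -(interchange HC) (vl HC) h1 (hid HC).
- by move=> a b ab; rewrite -(interchange HC) (vl HC) h2 // hcomp0r.
- rewrite (eq_bigr (fun a => hcomp (id2 F) (vcomp (E a) (P a)))); last first.
    by move=> a _; rewrite -(interchange HC) (vl HC).
  by rewrite -hcomp_sumr h3 (hid HC).
Qed.

Lemma decomp_right (G : Mor i j) (X : Mor j l) n (Z : 'I_n -> Mor j l) E P :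
  @decomp _ _ _ _ X n Z E P ->
  @decomp _ _ _ _ (comp1 X G) n (fun a => comp1 (Z a) G)
     (fun a => hcomp (E a) (id2 G)) (fun a => hcomp (P a) (id2 G)).
Proof.
move=> [h1 h2 h3]; split.
- by move=> a; rewrite -(interchange HC) (vl HC) h1 (hid HC).
- by move=> a b ab; rewrite -(interchange HC) (vl HC) h2 // hcomp0l.
- rewrite (eq_bigr (fun a => hcomp (vcomp (E a) (P a)) (id2 G))); last first.
    by move=> a _; rewrite -(interchange HC) (vl HC).
  by rewrite -hcomp_suml h3 (hid HC).
Qed.
End HcompLin.

End More.

End PD.
Import PD.

Module PE.
Set Implicit Arguments. Unset Strict Implicit. Unset Printing Implicit Defensive.
Import GRing.Theory.

Section Mor1.
Variables (k : fieldType) (C : cat2 k).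

Definition castMor (i j i' j' : Ob C) (e1 : i = i') (e2 : j = j') (X : Mor i j) : Mor i' j' :=
  match e1 in _ = a, e2 in _ = b return Mor a b with erefl, erefl => X end.

Definition Qx (h x : mor1 C) : nat :=
  match msrc x =P msrc h with
  | ReflectT e1 =>
    match mtgt x =P mtgt h with
    | ReflectT e2 => Q (mor h) (castMor e1 e2 (mor x))
    | ReflectF _ => 0
    end
  | ReflectF _ => 0
  end.

Lemma QxE (i j : Ob C) (H X : Mor i j) : Qx (Mor1 H) (Mor1 X) = Q H X.
Proof.
rewrite /Qx /=; case: eqP => [e1|//]; case: eqP => [e2|//].
by rewrite (eq_irrelevance e1 erefl) (eq_irrelevance e2 erefl).
Qed.

Lemma Qx_nz (h x : mor1 C) : Qx h x <> 0 -> msrc x = msrc h /\ mtgt x = mtgt h.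
Proof. by rewrite /Qx; case: eqP => // e1; case: eqP. Qed.

Definition compx (x y : mor1 C) : mor1 C :=
  match mtgt y =P msrc x with
  | ReflectT e => Mor1 (comp1 (mor x) (castMor (erefl _) e (mor y)))
  | ReflectF _ => y
  end.

Lemma compxE (i j l : Ob C) (F : Mor j l) (G : Mor i j) :
  compx (Mor1 F) (Mor1 G) = Mor1 (comp1 F G).
Proof.
rewrite /compx /=; case: eqP => [e|//].
by rewrite (eq_irrelevance e erefl).
Qed.

Lemma compx_obj (x y : mor1 C) : mtgt y = msrc x ->
  msrc (compx x y) = msrc y /\ mtgt (compx x y) = mtgt x.
Proof.
case: x => jx lx F; case: y => iy jy G /= e; subst.
by rewrite compxE.
Qed.

Definition sigm (x : mor1 C) : {p : Ob C * Ob C & Mor p.1 p.2} :=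
  existT (fun p : Ob C * Ob C => Mor p.1 p.2) (msrc x, mtgt x) (mor x).

Lemma mor1_eq (i j : Ob C) (F G : Mor i j) : Mor1 F = Mor1 G -> F = G.
Proof.
move=> e; have := congr1 sigm e; rewrite /sigm /=.
apply: inj_pair2_eq_dec => x y; exact: eq_comparable.
Qed.

Lemma isoP_l (i j : Ob C) (F : Mor i j) (y : mor1 C) :
  isoP (Mor1 F) y -> exists G : Mor i j, y = Mor1 G /\ iso F G.
Proof.
move=> [i' [j' [F0 [G0 [e1 e2 h]]]]].
have ei := congr1 (@msrc _ _) e1; have ej := congr1 (@mtgt _ _) e1.
simpl in ei, ej; subst i' j'.
by rewrite -(mor1_eq e1) in h; exists G0; split.
Qed.

End Mor1.

End PE.
Import PE.

Module PF.
Set Implicit Arguments. Unset Strict Implicit. Unset Printing Implicit Defensive.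
Import GRing.Theory.

Section Main.
Variables (k : fieldType) (C : cat2 k) (HC : finitary C).
Variables (S : finType) (cls : mor1 C -> S) (HS : iso_classes cls).
Variables (rho : S -> mor1 C) (hrho : forall s, indecP (rho s) /\ cls (rho s) = s).

Let HC1 : is_strict_2cat C. Proof. by case: HC. Qed.
Let HKS (i j : Ob C) : krull_schmidt i j. Proof. by case: HC => _ h _ _; case: (h i j). Qed.
Let HIS (i j : Ob C) : idem_split i j. Proof. by case: HC => _ h _ _; case: (h i j). Qed.

Lemma indec_loc (i j : Ob C) (X : Mor i j) : indecomposable X -> local_end X.
Proof. move=> h; have := @indec_local _ _ HC1 i j X (@HIS i j) (@HKS i j) h; exact. Qed.

Lemma iso_sym (i j : Ob C) (X Y : Mor i j) : iso X Y -> iso Y X.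
Proof. by move=> [f [g [h1 h2]]]; exists g, f. Qed.

Definition dd (w : S) := Qx (rho w) (rho w).

Lemma rho_loc w (i j : Ob C) (R : Mor i j) : rho w = Mor1 R -> local_end R.
Proof.
move=> e; have [h _] := hrho w; rewrite e in h; exact: indec_loc h.
Qed.

Lemma dd_pos w : (0 < dd w)%N.
Proof.
rewrite /dd; case E: (rho w) => [i j R]; rewrite QxE.
exact: (@Q_self_pos _ _ HC1 _ _ _ (rho_loc E)).
Qed.

Lemma cls_iso (i j : Ob C) (Y G : Mor i j) : local_end Y -> local_end G ->
  (cls (Mor1 Y) = cls (Mor1 G) <-> iso Y G).
Proof.
move=> hY hG; have [_ h2] := HS.
rewrite (h2 (Mor1 Y) (Mor1 G) (local_indec HC1 hY) (local_indec HC1 hG)).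
split; first by case/isoP_l => G' [/mor1_eq <-].
by move=> hi; exists i, j, Y, G.
Qed.

Lemma rep_of (i j : Ob C) (Y : Mor i j) : local_end Y ->
  exists G : Mor i j, rho (cls (Mor1 Y)) = Mor1 G /\ iso Y G.
Proof.
move=> hY; apply: isoP_l; have [_ h2] := HS.
have [hr1 hr2] := hrho (cls (Mor1 Y)).
by apply: (proj1 (h2 (Mor1 Y) (rho (cls (Mor1 Y))) (local_indec HC1 hY) hr1)); rewrite hr2.
Qed.

Lemma gen_sum (i j i' l' : Ob C) (H : Mor i' l') (Hl : local_end H)
  (Phi : Mor i j -> Mor i' l') (T : S -> nat)
  (hdec : forall (X : Mor i j) n Z E P, @decomp _ _ _ _ X n Z E P ->
      Q H (Phi X) = (\sum_a Q H (Phi (Z a)))%N)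
  (hiso : forall w (Y G : Mor i j), rho w = Mor1 G -> iso Y G -> Q H (Phi Y) = T w)
  (X : Mor i j) : Q H (Phi X) = (\sum_w (Qx (rho w) (Mor1 X) %/ dd w) * T w)%N.
Proof.
have [_ hks] := @HKS i j; have [n [Y [e [p [hl h1 h2 h3]]]]] := hks X.
have dX : @decomp _ _ _ _ X n Y e p by split.
rewrite (hdec _ _ _ _ _ dX).
pose wa a := cls (Mor1 (Y a)).
rewrite (eq_bigr (fun a => T (wa a))); last first.
  move=> a _; have [G [eG iG]] := rep_of (hl a); exact: hiso eG iG.
have hcnt : forall w, Qx (rho w) (Mor1 X) = ((\sum_a (wa a == w)) * dd w)%N.
  move=> w; rewrite /dd; case Ew: (rho w) => [i0 j0 R]; rewrite QxE.
  have Rl := rho_loc Ew.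
  case: (eqVneq i0 i) => [ei|ni]; first case: (eqVneq j0 j) => [ej|nj].
  - subst i0 j0; rewrite QxE (Qdec HC1 Rl dX) big_distrl /=.
    apply: eq_bigr => a _; case: (eqVneq (wa a) w) => [ew|nw].
      rewrite mul1n; have [G [eG iG]] := rep_of (hl a).
      rewrite -/(wa a) ew Ew in eG; move/mor1_eq: eG => <- in iG.
      exact: (@Q_iso _ _ HC1 _ _ _ _ _ Rl iG).
    rewrite mul0n; apply: (@Q_noniso _ _ HC1 _ _ _ _ Rl (hl a)) => hi.
    move/eqP: nw; apply; rewrite /wa; have [_ <-] := hrho w; rewrite Ew.
    by apply: (proj2 (cls_iso (hl a) Rl)); apply: iso_sym.
  - have -> : Qx (Mor1 R) (Mor1 X) = 0%N.
      by apply: NNPP => /Qx_nz [_ /= ej]; rewrite ej eqxx in nj.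
    rewrite big1 // => a _; case: (eqVneq (wa a) w) => [ew|//].
    have [G [eG _]] := rep_of (hl a); rewrite -/(wa a) ew Ew in eG.
    by have := congr1 (@mtgt _ _) eG => /= ej; rewrite ej eqxx in nj.
  - have -> : Qx (Mor1 R) (Mor1 X) = 0%N.
      by apply: NNPP => /Qx_nz [/= ei _]; rewrite ei eqxx in ni.
    rewrite big1 // => a _; case: (eqVneq (wa a) w) => [ew|//].
    have [G [eG _]] := rep_of (hl a); rewrite -/(wa a) ew Ew in eG.
    by have := congr1 (@msrc _ _) eG => /= ei; rewrite ei eqxx in ni.
rewrite (eq_bigr (fun w => (\sum_a (wa a == w)) * T w)%N); last first.
  by move=> w _; rewrite hcnt mulnK // dd_pos.
rewrite (eq_bigr (fun w => \sum_a ((wa a == w) * T w))%N); last first.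
  by move=> w _; rewrite big_distrl.
rewrite exchange_big /=; apply: eq_bigr => a _.
rewrite (bigD1 (wa a)) //= eqxx mul1n big1 ?addn0 // => w /negPf.
by rewrite eq_sym => ->.
Qed.

Lemma Qx_zero (h x : mor1 C) : ~ (msrc x = msrc h /\ mtgt x = mtgt h) -> Qx h x = 0%N.
Proof. by move=> hn; apply: NNPP => /Qx_nz. Qed.

Lemma Q_iso_comp (i j l : Ob C) (H : Mor i l) (F F' : Mor j l) (G G' : Mor i j) :
  local_end H -> iso F F' -> iso G G' -> Q H (comp1 F G) = Q H (comp1 F' G').
Proof.
move=> hl [f [g [h1 h2]]] [f' [g' [h1' h2']]].
rewrite (@Qdec _ _ HC1 _ _ _ _ _ _ _ _ hl (decomp_right HC1 G (iso_decomp h1 h2))) big_ord1.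
by rewrite (@Qdec _ _ HC1 _ _ _ _ _ _ _ _ hl (decomp_left HC1 F' (iso_decomp h1' h2'))) big_ord1.
Qed.

Lemma star_left (x y : mor1 C) (u : S) : mtgt y = msrc x ->
  Qx (rho u) (compx x y) =
  (\sum_w (Qx (rho w) y %/ dd w) * Qx (rho u) (compx x (rho w)))%N.
Proof.
case: x => jx lx F; case: y => iy jy G /= e; subst jy; rewrite compxE.
case Eu: (rho u) => [iu lu H].
case: (eqVneq iu iy) => [ei|ni]; first case: (eqVneq lu lx) => [el|nl].
- subst iu lu; rewrite QxE.
  apply: (gen_sum (rho_loc Eu) (Phi := comp1 F)).
  + move=> X n Z E P hd.
    exact: (@Qdec _ _ HC1 _ _ _ _ _ _ _ _ (rho_loc Eu) (decomp_left HC1 F hd)).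
  + move=> w Y G' Ew hi; rewrite Ew compxE QxE.
    by apply: Q_iso_comp (rho_loc Eu) _ hi; exists (id2 F), (id2 F); rewrite (vl HC1).
- rewrite Qx_zero; last by move=> [_ /= el]; rewrite el eqxx in nl.
  apply/esym; rewrite big1 // => w _.
  case Ew: (rho w) => [i0 j0 R].
  case: (eqVneq (Qx (Mor1 R) (Mor1 G)) 0%N) => [->|]; first by rewrite div0n ?mul0n.
  move=> /eqP /Qx_nz [/= e1 e2]; subst i0 j0; rewrite compxE (@Qx_zero (Mor1 H)) ?muln0 //.
  by move=> [_ /= el]; rewrite el eqxx in nl.
- rewrite Qx_zero; last by move=> [/= ei _]; rewrite ei eqxx in ni.
  apply/esym; rewrite big1 // => w _.
  case Ew: (rho w) => [i0 j0 R].
  case: (eqVneq (Qx (Mor1 R) (Mor1 G)) 0%N) => [->|]; first by rewrite div0n ?mul0n.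
  move=> /eqP /Qx_nz [/= e1 e2]; subst i0 j0; rewrite compxE (@Qx_zero (Mor1 H)) ?muln0 //.
  by move=> [/= ei _]; rewrite ei eqxx in ni.
Qed.

Lemma star_right (x y : mor1 C) (u : S) : mtgt y = msrc x ->
  Qx (rho u) (compx x y) =
  (\sum_w (Qx (rho w) x %/ dd w) * Qx (rho u) (compx (rho w) y))%N.
Proof.
case: x => jx lx F; case: y => iy jy G /= e; subst jy; rewrite compxE.
case Eu: (rho u) => [iu lu H].
case: (eqVneq iu iy) => [ei|ni]; first case: (eqVneq lu lx) => [el|nl].
- subst iu lu; rewrite QxE.
  apply: (gen_sum (rho_loc Eu) (Phi := fun X => comp1 X G)).
  + move=> X n Z E P hd.
    exact: (@Qdec _ _ HC1 _ _ _ _ _ _ _ _ (rho_loc Eu) (decomp_right HC1 G hd)).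
  + move=> w Y F' Ew hi; rewrite Ew compxE QxE.
    by apply: Q_iso_comp (rho_loc Eu) hi _; exists (id2 G), (id2 G); rewrite (vl HC1).
- rewrite Qx_zero; last by move=> [_ /= el]; rewrite el eqxx in nl.
  apply/esym; rewrite big1 // => w _.
  case Ew: (rho w) => [i0 j0 R].
  case: (eqVneq (Qx (Mor1 R) (Mor1 F)) 0%N) => [->|]; first by rewrite div0n ?mul0n.
  move=> /eqP /Qx_nz [/= e1 e2]; subst i0 j0; rewrite compxE (@Qx_zero (Mor1 H)) ?muln0 //.
  by move=> [_ /= el]; rewrite el eqxx in nl.
- rewrite Qx_zero; last by move=> [/= ei _]; rewrite ei eqxx in ni.
  apply/esym; rewrite big1 // => w _.
  case Ew: (rho w) => [i0 j0 R].
  case: (eqVneq (Qx (Mor1 R) (Mor1 F)) 0%N) => [->|]; first by rewrite div0n ?mul0n.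
  move=> /eqP /Qx_nz [/= e1 e2]; subst i0 j0; rewrite compxE (@Qx_zero (Mor1 H)) ?muln0 //.
  by move=> [/= ei _]; rewrite ei eqxx in ni.
Qed.

Lemma dd_dvd (u : S) (z : mor1 C) : (dd u %| Qx (rho u) z)%N.
Proof.
rewrite /dd; case Eu: (rho u) => [i j H]; rewrite QxE.
case: z => i' j' Z.
case: (eqVneq i' i) => [ei|ni]; first case: (eqVneq j' j) => [ej|nj].
- subst i' j'; rewrite QxE.
  have [_ hks] := @HKS i j; have [n [Y [e [p [hl h1 h2 h3]]]]] := hks Z.
  have dX : @decomp _ _ _ _ Z n Y e p by split.
  rewrite (@Qdec _ _ HC1 _ _ _ _ _ _ _ _ (rho_loc Eu) dX).
  apply: dvdn_sum => a _.
  case: (classic (iso H (Y a))) => hi.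
    by rewrite (@Q_iso _ _ HC1 _ _ _ _ _ (rho_loc Eu) (iso_sym hi)).
  by rewrite (@Q_noniso _ _ HC1 _ _ _ _ (rho_loc Eu) (hl a) hi) dvdn0.
- by rewrite Qx_zero ?dvdn0 // => [[_ /= e]]; rewrite e eqxx in nj.
- by rewrite Qx_zero ?dvdn0 // => [[/= e _]]; rewrite e eqxx in ni.
Qed.

Lemma compxA (x y z : mor1 C) : mtgt z = msrc y -> mtgt y = msrc x ->
  compx x (compx y z) = compx (compx x y) z.
Proof.
case: x => jx lx F; case: y => iy jy G; case: z => i0 j0 Z /= e1 e2; subst.
by rewrite !compxE (c1A HC1).
Qed.

Definition mu (s t u : S) : nat :=
  if mtgt (rho t) == msrc (rho s) then Qx (rho u) (compx (rho s) (rho t)) %/ dd u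
  else 0%N.

Lemma sum_div (I : finType) (c b : I -> nat) d : (0 < d)%N -> (forall i, d %| b i)%N ->
  (\sum_i c i * (b i %/ d) = (\sum_i c i * b i) %/ d)%N.
Proof.
move=> d0 hd.
have -> : (\sum_i c i * b i = (\sum_i c i * (b i %/ d)) * d)%N.
  rewrite big_distrl; apply: eq_bigr => i _.
  by rewrite /= -mulnA divnK.
by rewrite mulnK.
Qed.

Lemma mu_assoc (r s t u : S) :
  (\sum_i mu s t i * mu r i u = \sum_j mu r s j * mu j t u)%N.
Proof.
rewrite /mu.
case: (eqVneq (mtgt (rho t)) (msrc (rho s))) => c1;
  case: (eqVneq (mtgt (rho s)) (msrc (rho r))) => c2.
-
  have eL : forall i, ((Qx (rho i) (compx (rho s) (rho t)) %/ dd i) *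
       (if mtgt (rho i) == msrc (rho r) then Qx (rho u) (compx (rho r) (rho i)) %/ dd u
        else 0) =
      (Qx (rho i) (compx (rho s) (rho t)) %/ dd i) *
       (Qx (rho u) (compx (rho r) (rho i)) %/ dd u))%N.
    move=> i; case: eqP => // ne.
    case: (eqVneq (Qx (rho i) (compx (rho s) (rho t))) 0%N) => [->|/eqP].
      by rewrite div0n ?mul0n.
    move/Qx_nz => [_ ht]; exfalso; apply: ne.
    by rewrite -ht (compx_obj c1).2 c2.
  have eR : forall j, ((Qx (rho j) (compx (rho r) (rho s)) %/ dd j) *
       (if mtgt (rho t) == msrc (rho j) then Qx (rho u) (compx (rho j) (rho t)) %/ dd u
        else 0) =
      (Qx (rho j) (compx (rho r) (rho s)) %/ dd j) *
       (Qx (rho u) (compx (rho j) (rho t)) %/ dd u))%N.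
    move=> j; case: eqP => // ne.
    case: (eqVneq (Qx (rho j) (compx (rho r) (rho s))) 0%N) => [->|/eqP].
      by rewrite div0n ?mul0n.
    move/Qx_nz => [hs _]; exfalso; apply: ne.
    by rewrite -hs (compx_obj c2).1 c1.
  rewrite (eq_bigr _ (fun i _ => eL i)) (eq_bigr _ (fun j _ => eR j)).
  rewrite !sum_div ?dd_pos //; try by move=> ?; apply: dd_dvd.
  rewrite -star_left; last by rewrite (compx_obj c1).2.
  rewrite -star_right; last by rewrite (compx_obj c2).1.
  by rewrite compxA.
- rewrite [RHS]big1; last by move=> j _; rewrite mul0n.
  apply: big1 => i _; case: eqP => [ei|]; last by rewrite muln0.
  case: (eqVneq (Qx (rho i) (compx (rho s) (rho t))) 0%N) => [->|/eqP].
    by rewrite div0n ?mul0n.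
  move/Qx_nz => [_ ht]; exfalso; move/eqP: c2; apply.
  by rewrite -ei -ht (compx_obj c1).2.
- rewrite big1; last by move=> i _; rewrite mul0n.
  apply/esym/big1 => j _; case: eqP => [ej|]; last by rewrite muln0.
  case: (eqVneq (Qx (rho j) (compx (rho r) (rho s))) 0%N) => [->|/eqP].
    by rewrite div0n ?mul0n.
  move/Qx_nz => [hs _]; exfalso; move/eqP: c1; apply.
  by rewrite ej -hs (compx_obj c2).1.
- by rewrite !big1 // => ? _; rewrite mul0n.
Qed.

Lemma mu_star (s t u : S) : msg_star cls s t u <-> mu s t u <> 0%N.
Proof.
split.
- move=> [x [y [z [ix iy iz [cx cy cz [i [j [l [F [G [H [ex ey ez hsum]]]]]]]]]]]].
  subst x y z.
  have lF := indec_loc ix; have lG := indec_loc iy; have lH := indec_loc iz.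
  have [F' [eF iF]] := rep_of lF; have [G' [eG iG]] := rep_of lG.
  have [H' [eH iH]] := rep_of lH.
  rewrite cx in eF; rewrite cy in eG; rewrite cz in eH.
  have lH' := rho_loc eH.
  rewrite /mu eF eG eH /= eqxx compxE QxE /dd eH QxE.
  rewrite -(Q_iso_comp lH' iF iG).
  have hpos : (0 < Q H' (comp1 F G))%N.
    apply/(@Q_pos _ _ HC1 _ _ _ _ lH').
    case: hsum => Z [p1 [p2 [e1 [e2 [h1 _ _ _ _]]]]].
    case: iH => al [be [hab hba]].
    exists (vcomp e1 be), (vcomp al p1).
    rewrite -(vAs HC1) (vAs HC1 p1) h1 (vl HC1) hba; exact: inv_id.
  have hd := dd_dvd u (Mor1 (comp1 F' G')).
  rewrite /dd eH !QxE -(Q_iso_comp lH' iF iG) in hd.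
  have d0 := @Q_self_pos _ _ HC1 _ _ _ lH'.
  apply/eqP; rewrite -lt0n divn_gt0 //; exact: dvdn_leq hpos hd.
- rewrite /mu; case: eqP => [e|]; last by [].
  case: (eqVneq (Qx (rho u) (compx (rho s) (rho t))) 0%N) => [->|nz _].
    by rewrite div0n.
  have [ips cs] := hrho s; have [ipt ct] := hrho t; have [ipu cu] := hrho u.
  move: nz e ips cs ipt ct ipu cu.
  case: (rho s) => [js ls F]; case: (rho t) => [it jt G]; case: (rho u) => [iu lu H] /=.
  move=> nz e; subst jt; rewrite compxE in nz.
  have [/= e1 e2] := Qx_nz (elimN eqP nz); subst iu lu.
  rewrite QxE in nz => ips cs ipt ct ipu cu.
  have lH := indec_loc ipu.
  have /(@Q_pos _ _ HC1 _ _ _ _ lH) [f [g [w [w1 w2]]]] : (0 < Q H (comp1 F G))%N by rewrite lt0n.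
  have hPE : vcomp (vcomp w g) f = id2 H by rewrite -(vAs HC1).
  have [Z [r [sm [hb _ _]]]] := @summand_of _ _ HC1 _ _ H (comp1 F G) f (vcomp w g)
     (@HIS _ _) hPE.
  exists (Mor1 F), (Mor1 G), (Mor1 H); split => //; split => //.
  by exists it, js, ls, F, G, H; split => //; exists Z.
Qed.

End Main.

End PF.
Import PF.

Theorem proposition14 (k : fieldType) (C : cat2 k) (HC : finitary C)
  (S : finType) (cls : mor1 C -> S) (HS : iso_classes cls) :
  exists mu : S -> S -> S -> nat, deformation (msg_star cls) mu.
Proof.
pose rho := fun s => proj1_sig (constructive_indefinite_description _ (proj1 HS s)).
have hrho : forall s, indecP (rho s) /\ cls (rho s) = s.
  by move=> s; exact: (proj2_sig (constructive_indefinite_description _ (proj1 HS s))).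
exists (mu rho); split.
  by move=> r s t u; exact: (mu_assoc HC HS hrho r s t u).
by move=> x y z; exact: (mu_star HC HS hrho x y z).
Qed.
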